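(* Let $(M,d)$ be a pointed metric space, let $A\subseteq \widetilde{M}$ and let $\gamma\in(0,1]$. Then $A$ is $\gamma$-cyclically monotonic if and only if there exists $f\in B_{\mathrm{Lip}_0(M)}$ such that $f(m_{x,y})\geq \gamma$ for all $(x,y)\in A$.
   Context: $(M,d)$ is a metric space with a distinguished base point $0$. $\mathrm{Lip}_0(M)$ is the real Banach space of Lipschitz functions $f\colon M\to\mathbb{R}$ with $f(0)=0$, with norm $\|f\|=\sup\{|f(x)-f(y)|/d(x,y): x\neq y\}$; $B_{\mathrm{Lip}_0(M)}$ is its closed unit ball. $\widetilde{M}=\{(x,y)\in M\times M: x\neq y\}$. For $(x,y)\in\widetilde M$, $m_{x,y}=(\delta_x-\delta_y)/d(x,y)\in\mathrm{Lip}_0(M)^*$, where $\delta_x(f)=f(x)$; thus $f(m_{x,y})=(f(x)-f(y))/d(x,y)$. For $\gamma\in(0,1]$, a set $A\subseteq\widetilde M$ is called $\gamma$-cyclically monotonic if for every finite sequence of pairs $(x_1,y_1),\dots,(x_n,y_n)\in A$, setting $y_{n+1}=y_1$, one has $\sum_{i=1}^n \min\{d(x_i,y_{i+1})-\gamma d(x_i,y_i),\, d(y_i,y_{i+1})\}\geq 0$. *)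

(* Defs.v *)
From Stdlib Require Import Reals.
Open Scope R_scope.

Definition is_metric {M : Type} (d : M -> M -> R) : Prop :=
  (forall x y, 0 <= d x y) /\
  (forall x y, d x y = 0 <-> x = y) /\
  (forall x y, d x y = d y x) /\
  (forall x y z, d x z <= d x y + d y z).

Definition in_Lip0_ball {M : Type} (d : M -> M -> R) (z0 : M) (f : M -> R) : Prop :=
  f z0 = 0 /\ forall x y, Rabs (f x - f y) <= d x y.

Definition eval_mol {M : Type} (d : M -> M -> R) (f : M -> R) (x y : M) : R :=
  (f x - f y) / d x y.

(* A ⊆ M~ = {(x,y) : x <> y}, A given as a relation. *)
Definition subset_tildeM {M : Type} (A : M -> M -> Prop) : Prop :=
  forall x y, A x y -> x <> y.

Definition cyc_next (n i : nat) : nat := if Nat.eqb i n then 0%nat else S i.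

Definition gamma_cyc_mon {M : Type} (d : M -> M -> R) (gamma : R)
  (A : M -> M -> Prop) : Prop :=
  forall (n : nat) (x y : nat -> M),
    (forall i, (i <= n)%nat -> A (x i) (y i)) ->
    0 <= sum_f_R0 (fun i => Rmin (d (x i) (y (cyc_next n i)) - gamma * d (x i) (y i))
                                 (d (y i) (y (cyc_next n i)))) n.

(* Main.v *)
Require Import Defs.
From Stdlib Require Import Reals Lra Lia.
Open Scope R_scope.

Lemma Rabs_le_inv (a b : R) : Rabs a <= b -> - b <= a <= b.
Proof. intros H. pose proof (Rle_abs a). pose proof (Rle_abs (- a)). rewrite Rabs_Ropp in *. lra. Qed.

Lemma cyc_lt n i : (i < n)%nat -> cyc_next n i = S i.
Proof. intros H. unfold cyc_next. destruct (Nat.eqb_spec i n); [lia|reflexivity]. Qed.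

Lemma cyc_n n : cyc_next n n = 0%nat.
Proof. unfold cyc_next. now rewrite Nat.eqb_refl. Qed.

Lemma tele_aux (g : nat -> R) n m : (m < n)%nat ->
  sum_f_R0 (fun i => g i - g (cyc_next n i)) m = g 0%nat - g (S m).
Proof.
  induction m; intros H; simpl.
  - rewrite cyc_lt by lia. ring.
  - rewrite IHm by lia. rewrite cyc_lt by lia. ring.
Qed.

Lemma tele (g : nat -> R) n :
  sum_f_R0 (fun i => g i - g (cyc_next n i)) n = 0.
Proof.
  destruct n as [|m].
  - simpl. rewrite cyc_n. ring.
  - simpl. rewrite tele_aux by lia. rewrite cyc_n. ring.
Qed.

Fixpoint chT {M : Type} (d : M -> M -> R) (x y : nat -> M) (n : nat) : R :=
  match n with
  | O => 0
  | S m => chT d x y m + d (x m) (y (S m))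
  end.

Lemma chT_cyc_aux {M : Type} (d : M -> M -> R) (x y : nat -> M) n m : (m < n)%nat ->
  sum_f_R0 (fun i => d (x i) (y (cyc_next n i))) m = chT d x y (S m).
Proof.
  induction m; intros H; simpl.
  - rewrite cyc_lt by lia. ring.
  - rewrite IHm by lia. rewrite cyc_lt by lia. simpl. ring.
Qed.

Lemma chT_cyc {M : Type} (d : M -> M -> R) (x y : nat -> M) n :
  sum_f_R0 (fun i => d (x i) (y (cyc_next n i))) n = chT d x y n + d (x n) (y 0%nat).
Proof.
  destruct n as [|m].
  - simpl. rewrite cyc_n. ring.
  - simpl. rewrite chT_cyc_aux by lia. rewrite cyc_n. simpl. ring.
Qed.

Lemma chT_ext {M : Type} (d : M -> M -> R) (x y x' y' : nat -> M) n :
  (forall i, (i <= n)%nat -> x i = x' i /\ y i = y' i) ->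
  chT d x y n = chT d x' y' n.
Proof.
  induction n; intros H; simpl; auto.
  rewrite IHn by (intros; apply H; lia).
  destruct (H n ltac:(lia)) as [-> _]. destruct (H (S n) ltac:(lia)) as [_ ->]. ring.
Qed.

Theorem proposition2p2 (M : Type) (d : M -> M -> R) (z0 : M)
  (A : M -> M -> Prop) (gamma : R) :
  is_metric d -> subset_tildeM A -> 0 < gamma <= 1 ->
  (gamma_cyc_mon d gamma A <->
   exists f : M -> R, in_Lip0_ball d z0 f /\
     forall x y, A x y -> gamma <= eval_mol d f x y).
Proof.
  intros [Hpos [Hzero [Hsym Htri]]] HA Hg.
  assert (Hdd : forall u, d u u = 0) by (intro u; apply Hzero; reflexivity).
  assert (HdA : forall x y, A x y -> 0 < d x y).
  { intros x y Hxy. destruct (Rle_lt_or_eq_dec _ _ (Hpos x y)) as [h|h]; auto.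
    exfalso. apply (HA x y Hxy). apply Hzero. auto. }
  split.
  - intros Hcyc.
    assert (Hcl : forall n x y, (forall i, (i <= n)%nat -> A (x i) (y i)) ->
       gamma * sum_f_R0 (fun i => d (x i) (y i)) n <= chT d x y n + d (x n) (y 0%nat)).
    { intros n x y Hxy. specialize (Hcyc n x y Hxy).
      rewrite <- chT_cyc.
      assert (sum_f_R0 (fun i => Rmin (d (x i) (y (cyc_next n i)) - gamma * d (x i) (y i))
                                 (d (y i) (y (cyc_next n i)))) n <=
              sum_f_R0 (fun i => d (x i) (y (cyc_next n i)) - d (x i) (y i) * gamma) n).
      { apply sum_Rle. intros i _. eapply Rle_trans. apply Rmin_l. lra. }
      rewrite minus_sum, <- scal_sum in H. lra. }
    set (val := fun n (x y : nat -> M) u =>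
       gamma * sum_f_R0 (fun i => d (x i) (y i)) n - chT d x y n - d u (x n) - d (y 0%nat) z0).
    set (E := fun u v => v = - d u z0 \/ exists n x y,
                (forall i, (i <= n)%nat -> A (x i) (y i)) /\ v = val n x y u).
    assert (Hb : forall u, bound (E u)).
    { intro u. exists (d u z0). intros v [->|[n [x [y [Hxy ->]]]]].
      - pose proof (Hpos u z0). lra.
      - pose proof (Hcl n x y Hxy). unfold val.
        pose proof (Htri (x n) u (y 0%nat)). pose proof (Htri u z0 (y 0%nat)).
        rewrite (Hsym (x n) u) in *. rewrite (Hsym z0 (y 0%nat)) in *. lra. }
    assert (Hne : forall u, exists v, E u v).
    { intro u. exists (- d u z0). left. reflexivity. }
    set (f := fun u => proj1_sig (completeness (E u) (Hb u) (Hne u))).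
    assert (Hf : forall u, is_lub (E u) (f u)).
    { intro u. unfold f. destruct (completeness (E u) (Hb u) (Hne u)). auto. }
    assert (Hlip : forall u v, f v <= f u + d u v).
    { intros u v. apply (proj2 (Hf v)). intros w [->|[n [x [y [Hxy ->]]]]].
      - assert (- d u z0 <= f u) by (apply (proj1 (Hf u)); left; auto).
        pose proof (Htri u v z0). lra.
      - assert (val n x y u <= f u) by (apply (proj1 (Hf u)); right; exists n, x, y; auto).
        unfold val in *. pose proof (Htri u v (x n)). lra. }
    exists f. split; [split|].
    + assert (h1 : - d z0 z0 <= f z0) by (apply (proj1 (Hf z0)); left; auto).
      assert (h2 : f z0 <= 0).
      { apply (proj2 (Hf z0)). intros w [->|[n [x [y [Hxy ->]]]]].
        - rewrite Hdd; lra.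
        - pose proof (Hcl n x y Hxy). unfold val.
          pose proof (Htri (x n) z0 (y 0%nat)).
          rewrite (Hsym (x n) z0) in *. rewrite (Hsym z0 (y 0%nat)) in *. lra. }
      rewrite Hdd in h1. lra.
    + intros u v. apply Rabs_le. pose proof (Hlip u v). pose proof (Hlip v u).
      rewrite (Hsym v u) in *. lra.
    + intros a b Hab. unfold eval_mol. pose proof (HdA a b Hab).
      apply Rmult_le_reg_r with (d a b); auto.
      unfold Rdiv. rewrite Rmult_assoc, Rinv_l by lra. rewrite Rmult_1_r.
      cut (f b <= f a - gamma * d a b). lra.
      apply (proj2 (Hf b)). intros w [->|[n [x [y [Hxy ->]]]]].
      * cut (gamma * d a b - d b z0 <= f a). lra.
        apply (proj1 (Hf a)). right. exists 0%nat, (fun _ => a), (fun _ => b).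
        split. intros; auto. unfold val. simpl. rewrite Hdd. ring.
      * set (x' := fun i => if Nat.eqb i (S n) then a else x i).
        set (y' := fun i => if Nat.eqb i (S n) then b else y i).
        cut (val (S n) x' y' a = val n x y b + gamma * d a b).
        { intro Heq. cut (val (S n) x' y' a <= f a). lra.
          apply (proj1 (Hf a)). right. exists (S n), x', y'. split; auto.
          intros i Hi. unfold x', y'. destruct (Nat.eqb_spec i (S n)); auto.
          apply Hxy. lia. }
        unfold val. simpl.
        assert (Hs : sum_f_R0 (fun i => d (x' i) (y' i)) n = sum_f_R0 (fun i => d (x i) (y i)) n).
        { apply sum_eq. intros i Hi. unfold x', y'. destruct (Nat.eqb_spec i (S n)); [lia|auto]. }
        assert (Ht : chT d x' y' n = chT d x y n).
        { apply chT_ext. intros i Hi. unfold x', y'. destruct (Nat.eqb_spec i (S n)); [lia|auto]. }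
        rewrite Hs, Ht. unfold x', y'. rewrite Nat.eqb_refl.
        replace (Nat.eqb n (S n)) with false by (symmetry; apply Nat.eqb_neq; lia).
        simpl. rewrite Hdd, (Hsym (x n) b). ring.
  - intros [f [[Hf0 Hf] Hmol]] n x y Hxy.
    apply Rle_trans with (sum_f_R0 (fun i => f (y i) - f (y (cyc_next n i))) n).
    + rewrite (tele (fun i => f (y i)) n). lra.
    + apply sum_Rle. intros i Hi. specialize (Hxy i Hi).
      pose proof (HdA _ _ Hxy). pose proof (Hmol _ _ Hxy) as Hm. unfold eval_mol in Hm.
      assert (Hm' : gamma * d (x i) (y i) <= f (x i) - f (y i)).
      { apply Rmult_le_reg_r with (/ d (x i) (y i)). apply Rinv_0_lt_compat; auto.
        rewrite Rmult_assoc, Rinv_r by lra. lra. }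
      pose proof (Rabs_le_inv _ _ (Hf (x i) (y (cyc_next n i)))).
      pose proof (Rabs_le_inv _ _ (Hf (y i) (y (cyc_next n i)))).
      apply Rmin_glb; lra.
Qed.
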